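(* Let $G=(V,E)$ be a temporal network with $m=|E|$ temporal edges, let $\alpha$ be the degeneracy of $G_S$, let $\pi$ be a degeneracy ordering of $G_S$, and let $\delta\ge 0$. Consider the procedure OutNeighbours, which for every pair $(u,v)$ with $\{u,v\}\in E(G_S)$ and $\pi(u)<\pi(v)$, and every $w\in N^{+}_{\pi}(u)$ adjacent to $v$, does the following: (i) with $L_1=E_{u,v}$, $L_2=E_{u,w}$, $L_3=E_{v,w}$, it computes for every $e\in L_1$ the first edge $L_{12}[e]$ of $L_2$ with timestamp at least $t(e)$ by a single merged linear scan of $L_1$ and $L_2$, computes for every $f\in L_2$ the first edge $L_{23}[f]$ of $L_3$ with timestamp at least $t(f)$ by binary search in $L_3$, and for each $e\in L_1$ increments out-count$[e]$ if $t(e)\le t(L_{12}[e])\le t(L_{23}[L_{12}[e]])\le t(e)+\delta$; (ii) with $L_1'=E_{v,u}$, $L_2'=E_{v,w}$, $L_3'=E_{u,w}$, it computes for every $e\in L_1'$ the last edge $L_{13}[e]$ of $L_3'$ with timestamp at most $t(e)+\delta$ by a single merged linear scan of $L_1'$ and $L_3'$, computes the first edge $L_{12}[e]$ of $L_2'$ with timestamp at least $t(e)$ by binary search in $L_2'$, and increments out-count$[e]$ if $t(e)\le t(L_{12}[e])\le t(L_{13}[e])\le t(e)+\delta$. Then OutNeighbours runs in time $O(m\,\alpha\log\sigma_{\max})$.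
   Context: A temporal network $G=(V,E)$ is a finite multiset of temporal edges $(x,y,t)$ with $x\neq y\in V$ and timestamp $t=t(e)\in\mathbb{R}$ (from $x$ to $y$; parallel edges in both directions allowed). For distinct $x,y$, $E_{x,y}$ is the list of temporal edges from $x$ to $y$ sorted by increasing timestamp, and $\sigma(x,y)$ is the number of temporal edges with endpoints $x$ and $y$ (either direction); $\sigma_{\max}=\max_{x,y}\sigma(x,y)$. $G_S$ is the simple undirected graph on $V$ with $\{x,y\}$ an edge iff some temporal edge joins $x$ and $y$; $N(x)$ is the neighbourhood of $x$ in $G_S$. For an ordering $\pi$ of $V$, $N^{+}_{\pi}(x)=\{y\in N(x):\pi(x)<\pi(y)\}$. The degeneracy $\alpha$ of $G_S$ is the smallest integer such that some ordering $\pi$ of $V$ satisfies $|N^{+}_{\pi}(x)|\le\alpha$ for all $x$; such an ordering is a degeneracy ordering. Computational model: each list $E_{x,y}$ can be accessed in $O(1)$ time and adjacency in $G_S$ can be tested in $O(1)$ time. *)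

(* Defs.v *)
From HB Require Import structures.
From mathcomp Require Import all_boot all_order all_algebra.
Set Implicit Arguments. Unset Strict Implicit. Unset Printing Implicit Defensive.
Import Order.TTheory GRing.Theory Num.Theory.

Section Temporal.
Variables (V : finType) (R : realDomainType).
(* A temporal network: a finite multiset (list) of temporal edges (x, y, t).
   Temporal edges are identified by their index in this list. *)
Variable E : seq (V * V * R).

Definition tE (i : nat) : R := nth 0%R [seq e.2 | e <- E] i.

Definition is_from (x y : V) (i : nat) : bool :=
  if nth None [seq Some e | e <- E] i is Some e
  then (e.1.1 == x) && (e.1.2 == y) else false.

Definition Elist (x y : V) : seq nat :=
  sort (fun i j => (tE i <= tE j)%R) [seq i <- iota 0 (size E) | is_from x y i].

Definition joins (x y : V) (e : V * V * R) : bool :=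
  ((e.1.1 == x) && (e.1.2 == y)) || ((e.1.1 == y) && (e.1.2 == x)).

Definition sigma (x y : V) : nat := count (joins x y) E.
Definition sigma_max : nat := \max_(x : V) \max_(y : V | x != y) sigma x y.

Definition adj (x y : V) : bool := (x != y) && has (joins x y) E.
Definition Nb (x : V) : {set V} := [set y | adj x y].
(* orderings of V are injective maps V -> nat (only relative order matters) *)
Definition Nplus (pi : V -> nat) (x : V) : {set V} := [set y in Nb x | pi x < pi y].

Definition bounded_ordering (pi : V -> nat) (a : nat) : Prop :=
  injective pi /\ forall x, #|Nplus pi x| <= a.

Definition is_degeneracy (a : nat) : Prop :=
  (exists pi, bounded_ordering pi a) /\
  (forall pi b, bounded_ordering pi b -> a <= b).

Definition degeneracy_ordering (pi : V -> nat) (a : nat) : Prop :=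
  bounded_ordering pi a.

(* ---------- cost-instrumented primitives (result, number of steps) ---------- *)

Fixpoint dropLt (x : R) (s : seq nat) : seq nat * nat :=
  match s with
  | [::] => ([::], 0)
  | f :: s' => if (tE f < x)%R then let: (r, c) := dropLt x s' in (r, c.+1)
               else (s, 0)
  end.

Fixpoint mergeFirst (L1 L2 : seq nat) : seq (option nat) * nat :=
  match L1 with
  | [::] => ([::], 1)
  | e :: L1' => let: (L2', c) := dropLt (tE e) L2 in
                let: (r, c') := mergeFirst L1' L2' in
                (ohead L2' :: r, c + 1 + c')
  end.

Fixpoint advLe (b : R) (last : option nat) (s : seq nat)
    : option nat * seq nat * nat :=
  match s with
  | [::] => (last, [::], 0)
  | f :: s' => if (tE f <= b)%R then let: (l, r, c) := advLe b (Some f) s' in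
                                   (l, r, c.+1)
               else (last, s, 0)
  end.

Fixpoint mergeLast (d : R) (last : option nat) (L1 L3 : seq nat)
    : seq (option nat) * nat :=
  match L1 with
  | [::] => ([::], 1)
  | e :: L1' => let: (l, L3', c) := advLe (tE e + d) last L3 in
                let: (r, c') := mergeLast d l L1' L3' in
                (l :: r, c + 1 + c')
  end.

(* binary search (random access to lists is O(1)): least index in [lo,hi)
   whose timestamp is >= x; cost = number of probes *)
Fixpoint bsearch_aux (L : seq nat) (x : R) (fuel lo hi : nat) : nat * nat :=
  match fuel with
  | 0 => (lo, 0)
  | fuel'.+1 =>
    if lo < hi then
      let mid := (lo + hi)./2 in
      let: (r, c) := if (tE (nth 0 L mid) < x)%R
                     then bsearch_aux L x fuel' mid.+1 hi
                     else bsearch_aux L x fuel' lo mid in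
      (r, c.+1)
    else (lo, 1)
  end.

Definition bsearch (L : seq nat) (x : R) : option nat * nat :=
  let: (i, c) := bsearch_aux L x (size L).+1 0 (size L) in
  (nth None [seq Some f | f <- L] i, c).

(* step (i) for the triangle (u,v,w): returns the list of edges whose
   out-count is incremented, and the cost *)
Definition part1 (d : R) (u v w : V) : seq nat * nat :=
  let L1 := Elist u v in let L2 := Elist u w in let L3 := Elist v w in
  let: (r12, c12) := mergeFirst L1 L2 in
  let c23 := \sum_(f <- L2) (bsearch L3 (tE f)).2 in
  let L23 f := (bsearch L3 (tE f)).1 in
  let ok e o := if o is Some f then
                  (if L23 f is Some g then
                     [&& tE e <= tE f, tE f <= tE g & tE g <= tE e + d]%R
                   else false)
                else false in
  ([seq p.1 | p <- [seq p <- zip L1 r12 | ok p.1 p.2]], c12 + c23 + size L1).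

Definition part2 (d : R) (u v w : V) : seq nat * nat :=
  let L1 := Elist v u in let L2 := Elist v w in let L3 := Elist u w in
  let: (r13, c13) := mergeLast d None L1 L3 in
  let c12 := \sum_(e <- L1) (bsearch L2 (tE e)).2 in
  let ok e o := if (bsearch L2 (tE e)).1 is Some f then
                  (if o is Some g then
                     [&& tE e <= tE f, tE f <= tE g & tE g <= tE e + d]%R
                   else false)
                else false in
  ([seq p.1 | p <- [seq p <- zip L1 r13 | ok p.1 p.2]], c13 + c12 + size L1).

(* work for one pair (u,v): loop over w in N^+(u), O(1) adjacency test *)
Definition pair_work (pi : V -> nat) (d : R) (u v : V) : seq nat * nat :=
  foldr (fun w acc =>
           let: (inc, c) := acc in
           if adj v w then
             let: (i1, c1) := part1 d u v w in
             let: (i2, c2) := part2 d u v w in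
             (i1 ++ i2 ++ inc, c1 + c2 + c.+1)
           else (inc, c.+1))
        ([::], 1) (enum (Nplus pi u)).

Definition pairs (pi : V -> nat) : seq (V * V) :=
  flatten [seq [seq (u, v) | v <- enum V & adj u v && (pi u < pi v)] | u <- enum V].

(* OutNeighbours: (multiset of increments of out-count, total running time) *)
Definition OutNeighbours (pi : V -> nat) (d : R) : seq nat * nat :=
  foldr (fun p acc =>
           let: (inc, c) := acc in
           let: (i', c') := pair_work pi d p.1 p.2 in
           (i' ++ inc, c' + c))
        ([::], 0) (pairs pi).

Definition out_count (pi : V -> nat) (d : R) (e : nat) : nat :=
  count_mem e (OutNeighbours pi d).1.

Definition running_time (pi : V -> nat) (d : R) : nat := (OutNeighbours pi d).2.

End Temporal.

(* Main.v *)
Require Import Defs.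
From HB Require Import structures.
From mathcomp Require Import all_boot all_order all_algebra.
From mathcomp Require Import zify.
Import Order.TTheory GRing.Theory Num.Theory.
Set Implicit Arguments. Unset Strict Implicit. Unset Printing Implicit Defensive.
Section Costs.
Variables (V : finType) (R : realDomainType) (E : seq (V * V * R)).

Lemma dropLt_size x s : (dropLt E x s).2 + size (dropLt E x s).1 = size s.
Proof.
elim: s => [|f s IH] //=; case: ifP => _ //=.
by move: IH; case: dropLt => r c /= <-; rewrite addSn.
Qed.

Lemma mergeFirst_cost L1 L2 : (mergeFirst E L1 L2).2 <= size L1 + size L2 + 1.
Proof.
elim: L1 L2 => [|e L1 IH] L2 /=; first by rewrite addnC leq_addr.
have := dropLt_size (tE E e) L2; case: dropLt => L2' c /= Hs.
have := IH L2'; case: mergeFirst => r c' /= H; lia.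
Qed.

Lemma advLe_size b l s : (advLe E b l s).2 + size (advLe E b l s).1.2 = size s.
Proof.
elim: s l => [|f s IH] l //=; case: ifP => _ //=.
by move: (IH (Some f)); case: advLe => [[l' r] c] /= <-; rewrite addSn.
Qed.

Lemma mergeLast_cost d l L1 L3 : (mergeLast E d l L1 L3).2 <= size L1 + size L3 + 1.
Proof.
elim: L1 l L3 => [|e L1 IH] l L3 /=; first by rewrite addnC leq_addr.
have := advLe_size (tE E e + d) l L3; case: advLe => [[l' L3'] c] /= Hs.
have := IH l' L3'; case: mergeLast => r c' /= H; lia.
Qed.

Lemma bsearch_aux_cost L x fuel lo hi k :
  hi - lo < 2 ^ k -> (bsearch_aux E L x fuel lo hi).2 <= k.+1.
Proof.
elim: fuel lo hi k => [|f IH] lo hi k h //=.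
case: ltnP => Hlh //.
case: k h => [|k] h; first by rewrite expn0 in h; lia.
rewrite expnS in h.
have [H1 H2] : ((lo + hi)./2) * 2 <= lo + hi /\ lo + hi <= ((lo + hi)./2) * 2 + 1.
  by have := odd_double_half (lo + hi); rewrite -muln2; case: odd => /=; lia.
case: ifP => _.
  have := IH ((lo + hi)./2).+1 hi k. case: bsearch_aux => r c /= H.
  suff : c <= k.+1 by []. apply: H. set K := 2 ^ k in h *. lia.
have := IH lo ((lo + hi)./2) k; case: bsearch_aux => r c /= H.
suff : c <= k.+1 by []. apply: H. set K := 2 ^ k in h *. lia.
Qed.

Lemma bsearch_cost L x s : size L <= s -> (bsearch E L x).2 <= (trunc_log 2 s).+2.
Proof.
move=> Hs; rewrite /bsearch.
have := @bsearch_aux_cost L x (size L).+1 0 (size L) (trunc_log 2 s).+1.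
case: bsearch_aux => i c /= H; apply: H.
rewrite subn0; apply: leq_ltn_trans Hs _; exact: trunc_log_ltn.
Qed.

Lemma sum_bsearch_cost L2 L3 s : size L3 <= s ->
  \sum_(f <- L2) (bsearch E L3 (tE E f)).2 <= size L2 * (trunc_log 2 s).+2.
Proof.
move=> Hs; elim: L2 => [|f L2 IH]; first by rewrite big_nil.
rewrite big_cons /= mulSn; apply: leq_add => //; exact: bsearch_cost.
Qed.

End Costs.
Set Implicit Arguments. Unset Strict Implicit. Unset Printing Implicit Defensive.
Section S.
Variables (V : finType) (R : realDomainType) (E : seq (V * V * R)).
Definition dcount (x y : V) := count (fun e : V * V * R => (e.1.1 == x) && (e.1.2 == y)) E.

Lemma size_Elist x y : size (Elist E x y) = dcount x y.
Proof.
rewrite /Elist size_sort size_filter /dcount -[in RHS](mkseq_nth (x, x, 0%R) E) /mkseq count_map.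
apply: eq_in_count => i; rewrite mem_iota add0n => /andP[_ Hi] /=.
by rewrite /is_from (nth_map (x, x, 0%R)).
Qed.

Lemma size_Elist_max x y : x != y -> size (Elist E x y) <= sigma_max E.
Proof.
move=> Hxy; rewrite size_Elist; apply: (@leq_trans (sigma E x y)).
  by apply: sub_count => e; rewrite /joins => ->.
apply: (leq_trans _ (leq_bigmax x)).
exact: (@leq_bigmax_cond _ (fun y0 => x != y0) (fun y0 => sigma E x y0) y Hxy).
Qed.

Lemma count_sum (T : Type) (P : pred T) (s : seq T) : count P s = \sum_(x <- s) (P x : nat).
Proof. by elim: s => [|a s IH]; rewrite ?big_nil ?big_cons //= IH. Qed.

Lemma sum_pairs pi (F : V * V -> nat) : \sum_(p <- pairs E pi) F p =
  \sum_u \sum_(v | adj E u v && (pi u < pi v)) F (u, v).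
Proof.
rewrite /pairs big_flatten big_map /= big_enum /=; apply: eq_bigr => u _.
rewrite big_map big_filter big_enum_cond /=; by apply: eq_bigl => i.
Qed.

Lemma core (c : V -> V -> bool) (a b : V) :
  \sum_(u : V) \sum_(v | c u v) ((a == u) && (b == v) : nat) = c a b.
Proof.
rewrite [LHS](bigD1 a) //= [X in _ + X]big1 ?addn0; last first.
  move=> u /negbTE H; apply: big1 => v _; by rewrite eq_sym H.
rewrite big_mkcond [LHS](bigD1 b) //= eqxx big1 ?addn0.
  by rewrite eqxx; case: (c a b).
by move=> v /negbTE H; rewrite eq_sym H andbF; case: ifP.
Qed.

Lemma key pi : \sum_u \sum_(v | adj E u v && (pi u < pi v)) (dcount u v + dcount v u) <= size E.
Proof.
apply: (@leq_trans (\sum_u \sum_(v | pi u < pi v) \sum_(e <- E)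
   (((e.1.1 == u) && (e.1.2 == v) : nat) + ((e.1.1 == v) && (e.1.2 == u) : nat)))).
  apply: leq_sum => u _; rewrite [X in _ <= X]big_mkcond [X in X <= _]big_mkcond.
  apply: leq_sum => v _ /=; case: ifP => [/andP[_ ->]|_] //=.
  by rewrite /dcount !count_sum -big_split.
rewrite (eq_bigr (fun u => \sum_(e <- E) \sum_(v | pi u < pi v)
   (((e.1.1 == u) && (e.1.2 == v) : nat) + ((e.1.1 == v) && (e.1.2 == u) : nat)))); last first.
  by move=> u _; rewrite exchange_big.
rewrite exchange_big /= -[X in _ <= X]sum1_size; apply: leq_sum => e _.
rewrite (eq_bigr (fun u => \sum_(v | pi u < pi v) ((e.1.1 == u) && (e.1.2 == v) : nat) +
   \sum_(v | pi u < pi v) ((e.1.2 == u) && (e.1.1 == v) : nat))); last first.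
  by move=> u _; rewrite -big_split /=; apply: eq_bigr => v _; rewrite (andbC (e.1.1 == v)).
rewrite big_split /= (core (fun u v => pi u < pi v)) (core (fun u v => pi u < pi v)).
case: ltnP => h1 //=; case: ltnP => h2 //=; lia.
Qed.
End S.
Set Implicit Arguments. Unset Strict Implicit. Unset Printing Implicit Defensive.
Section S3.
Variables (V : finType) (R : realDomainType) (E : seq (V * V * R)).

Lemma part12_cost d u v w : adj E v w ->
  (part1 E d u v w).2 + (part2 E d u v w).2 <=
  (dcount E u v + dcount E v u + dcount E u w + 1) * (4 * (trunc_log 2 (sigma_max E)).+1).
Proof.
case/andP => Hvw _.
have h1 := mergeFirst_cost E (Elist E u v) (Elist E u w).
have h2 := mergeLast_cost E d None (Elist E v u) (Elist E u w).
have h3 := @sum_bsearch_cost _ _ E (Elist E u w) _ _ (size_Elist_max E Hvw).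
have h4 := @sum_bsearch_cost _ _ E (Elist E v u) _ _ (size_Elist_max E Hvw).
rewrite /part1 /part2; move: h1 h2.
case: mergeFirst => r c /= h1; case: mergeLast => r' c' /= h2.
move: h1 h2 h3 h4; rewrite !size_Elist.
set l := trunc_log 2 (sigma_max E).
nia.
Qed.

Lemma pair_work_cost pi d u v (B : V -> nat) :
  (forall w, adj E v w -> (part1 E d u v w).2 + (part2 E d u v w).2 <= B w) ->
  (pair_work E pi d u v).2 <= 1 + \sum_(w <- enum (Nplus E pi u)) (B w).+1.
Proof.
move=> H; rewrite /pair_work; elim: (enum _) => [|w s IH] /=; first by rewrite big_nil.
rewrite big_cons; move: IH; case: foldr => inc c /= IH.
case: ifP => Hvw; last by rewrite /=; lia.
have := H w Hvw; case: part1 => i1 c1; case: part2 => i2 c2 /= Hb; lia.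
Qed.

Lemma running_time_sum pi d :
  running_time E pi d = \sum_(p <- pairs E pi) (pair_work E pi d p.1 p.2).2.
Proof.
rewrite /running_time /OutNeighbours; elim: (pairs E pi) => [|p s IH] /=; first by rewrite big_nil.
rewrite big_cons -IH; case: foldr => inc c; case: pair_work => i c' //.
Qed.
End S3.
Theorem theorem3p3 :
  exists C : nat,
  forall (V : finType) (R : realDomainType) (E : seq (V * V * R)),
    all (fun e => e.1.1 != e.1.2) E ->
  forall alpha : nat, is_degeneracy E alpha ->
  forall pi : V -> nat, degeneracy_ordering E pi alpha ->
  forall delta : R, (0 <= delta)%R ->
    running_time E pi delta
      <= C * (size E * alpha * (trunc_log 2 (sigma_max E)).+1).
Proof.
exists 14 => V R E _ alpha _ pi [_ Hal] delta _.
set L := (trunc_log 2 (sigma_max E)).+1.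
set S := fun u v => dcount E u v + dcount E v u.
set T := fun u => \sum_(w in Nplus E pi u) dcount E u w.
have Hkey := key E pi.
have HN : forall u, Nplus E pi u = [set v | adj E u v && (pi u < pi v)].
  by move=> u; apply/setP => x; rewrite !inE.
rewrite running_time_sum sum_pairs.
apply: (@leq_trans (\sum_u \sum_(v | adj E u v && (pi u < pi v))
            (10 * alpha * L * S u v + 4 * L * T u))).
  apply: leq_sum => u _; apply: leq_sum => v /andP[Huv Hpi] /=.
  have h := @pair_work_cost V R E pi delta u v (fun w => (S u v + dcount E u w + 1) * (4 * L))
     (fun w H => @part12_cost V R E delta u v w H).
  apply: leq_trans h _.
  have hS : 1 <= S u v.
    move: Huv => /andP[_]; rewrite has_count => h; apply: leq_trans h _.
    rewrite /S /dcount -count_predUI; apply: leq_trans (leq_addr _ _).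
    by apply: sub_count => e.
  have hN := Hal u.
  have ha : 1 <= alpha.
    apply: leq_trans hN; apply/card_gt0P; exists v; by rewrite HN inE Huv Hpi.
  rewrite big_enum.
  apply: (@leq_trans (1 + \sum_(w in Nplus E pi u) ((1 + (S u v + 1) * (4 * L)) + dcount E u w * (4 * L)))).
    rewrite leq_add2l; apply: leq_sum => w _; nia.
  rewrite big_split /= sum_nat_const -big_distrl /= -/(T u).
  set n := #|_| in hN *. set s := S u v in hS *. set t := T u.
  have hL : 1 <= L by [].
  have h1 : 1 + (s + 1) * (4 * L) <= 9 * (L * s) by nia.
  have h2 : n * (1 + (s + 1) * (4 * L)) <= alpha * (9 * (L * s)) by apply: leq_mul.
  have h3 : 1 <= alpha * (L * s) by rewrite !muln_gt0 ha hL hS.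
  nia.
have HT : \sum_u T u <= size E.
  apply: leq_trans Hkey; apply: leq_sum => u _; rewrite /T HN.
  rewrite big_mkcond [X in _ <= X]big_mkcond; apply: leq_sum => w _; rewrite inE.
  by case: ifP => // _; exact: leq_addr.
apply: (@leq_trans (10 * alpha * L * (\sum_u \sum_(v | adj E u v && (pi u < pi v)) S u v)
                    + 4 * L * alpha * \sum_u T u)).
  rewrite !big_distrr -big_split; apply: leq_sum => u _.
  rewrite big_split /= -big_distrr /=; apply: leq_add => //.
  rewrite sum_nat_cond_const -HN; apply: (@leq_trans (alpha * (4 * L * T u))); first by apply: leq_mul => //; exact: Hal.
  by rewrite !mulnA (mulnC alpha) -!mulnA (mulnCA alpha).
apply: (@leq_trans (10 * alpha * L * size E + 4 * L * alpha * size E)).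
  by apply: leq_add; apply: leq_mul.
nia.
Qed.
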